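(* Let $d\ge2$ and $p\in[0,1]$. With systems $A'_1,A'_2,A_1,A_2,\tilde A,B$ (each $\mathbb{C}^d$), an arbitrary state $\rho_{\tilde AB}$, a POVM $\{M^{(i)}\}_{i=1}^K$ on $A_1A_2\tilde A$, unitaries $U^{(i,j)}_B$ ($j=1,2$), $\Omega=\psi^+_{A'_1A_1}\otimes\psi^+_{A'_2A_2}\otimes\rho_{\tilde AB}$, and $$F_j=\sum_{i=1}^{K}\operatorname{tr}\Big[\psi^+_{A'_jB}\,U^{(i,j)}_B\,\operatorname{tr}_{A_1A_2\tilde AA'_{\bar j}}\big[(M^{(i)}\otimes\mathbf 1)\,\Omega\big]\,U^{(i,j)\dagger}_B\Big]\quad(\bar j\ne j),$$ one has $$pF_1+(1-p)F_2\le\frac12\left(1+\sqrt{1+\frac{4(d^2-1)(p-1)p}{d^2}}\right).$$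
   Context: $\psi^+_{XY}$ denotes the maximally entangled state $|\psi^+\rangle\langle\psi^+|$ with $|\psi^+\rangle=\frac1{\sqrt d}\sum_{i=0}^{d-1}|ii\rangle$. This is the asymmetric constrained-entanglement random access code with two $d$-dimensional inputs, where Bob is asked for input 1 with probability $p$ and input 2 with probability $1-p$; $pF_1+(1-p)F_2$ is the success probability. *)

(* Defs.v *)
From HB Require Import structures.
From mathcomp Require Import all_boot all_order all_algebra.
From mathcomp Require Import complex.
From mathcomp Require Import reals.
Set Implicit Arguments. Unset Strict Implicit. Unset Printing Implicit Defensive.
Import Order.TTheory GRing.Theory Num.Theory.
Local Open Scope ring_scope.

Section QDefs.
Variable R : realType.
Local Notation C := (R[i]).

(* Operators on a finite-dimensional Hilbert space with orthonormal basis T. *)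
Definition Op (T : finType) := T -> T -> C.

Definition opmul (T : finType) (A B : Op T) : Op T :=
  fun x y => \sum_z A x z * B z y.
Definition opadj (T : finType) (A : Op T) : Op T :=
  fun x y => Num.conj (A y x).
Definition opid (T : finType) : Op T := fun x y => (x == y)%:R.
Definition optr (T : finType) (A : Op T) : C := \sum_x A x x.
Definition kron (T1 T2 : finType) (A : Op T1) (B : Op T2) : Op (T1 * T2)%type :=
  fun x y => A x.1 y.1 * B x.2 y.2.
Definition ptr1 (T1 T2 : finType) (A : Op (T1 * T2)%type) : Op T2 :=
  fun x y => \sum_z A (z, x) (z, y).

Definition psd (T : finType) (A : Op T) : Prop :=
  forall v : T -> C, 0 <= \sum_x \sum_y Num.conj (v x) * A x y * v y.
Definition is_state (T : finType) (rho : Op T) : Prop :=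
  psd rho /\ optr rho = 1.
Definition is_povm (T : finType) (K : nat) (M : 'I_K -> Op T) : Prop :=
  (forall i, psd (M i)) /\ (forall x y, \sum_i M i x y = opid x y).
Definition unitary (T : finType) (U : Op T) : Prop :=
  opmul (opadj U) U = opid (T:=T) /\ opmul U (opadj U) = opid (T:=T).

Definition psiplus (d : nat) : Op ('I_d * 'I_d)%type :=
  fun x y => ((x.1 == x.2) && (y.1 == y.2))%:R / d%:R.

(* Total system ordered as ((A_1, A_2, A~), (A'_1, A'_2, B)). *)
Definition Omega (d : nat) (rho : Op ('I_d * 'I_d)%type) :
  Op (('I_d * 'I_d * 'I_d) * ('I_d * 'I_d * 'I_d))%type :=
  fun x y =>
    let '((a1, a2, ta), (a1', a2', b)) := x in
    let '((c1, c2, ct), (c1', c2', e)) := y in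
    psiplus (a1', a1) (c1', c1) * psiplus (a2', a2) (c2', c2)
    * rho (ta, b) (ct, e).

(* tr_{A1 A2 A~}[(M (x) 1) Omega], an operator on (A'_1, A'_2, B) *)
Definition postM (d K : nat) (M : 'I_K -> Op ('I_d * 'I_d * 'I_d)%type)
  (rho : Op ('I_d * 'I_d)%type) (i : 'I_K) : Op ('I_d * 'I_d * 'I_d)%type :=
  ptr1 (opmul (kron (M i) (opid (T := ('I_d * 'I_d * 'I_d)%type))) (Omega rho)).

(* Reduced operator on (A'_j, B): trace out A'_{jbar}.  j = 0 means
   input 1 (trace out A'_2), j = 1 means input 2 (trace out A'_1). *)
Definition reduce (d : nat) (j : 'I_2) (X : Op ('I_d * 'I_d * 'I_d)%type) :
  Op ('I_d * 'I_d)%type :=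
  fun x y =>
    if j == ord0 then \sum_c X (x.1, c, x.2) (y.1, c, y.2)
    else \sum_c X (c, x.1, x.2) (c, y.1, y.2).

(* F_j of the paper (j = 0 is F_1, j = 1 is F_2) *)
Definition Fsucc (d K : nat) (M : 'I_K -> Op ('I_d * 'I_d * 'I_d)%type)
  (U : 'I_K -> 'I_2 -> Op 'I_d) (rho : Op ('I_d * 'I_d)%type) (j : 'I_2) : C :=
  \sum_i optr (opmul (psiplus (d := d))
      (opmul (opmul (kron (opid (T := 'I_d)) (U i j)) (reduce j (postM M rho i)))
             (opadj (kron (opid (T := 'I_d)) (U i j))))).

End QDefs.

(* Main.v *)
Require Import Defs.
From HB Require Import structures.
From mathcomp Require Import all_boot all_order all_algebra.
From mathcomp Require Import complex.
From mathcomp Require Import reals.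
From mathcomp Require Import ring lra.
Import Order.TTheory GRing.Theory Num.Theory.
Local Open Scope ring_scope.
Set Implicit Arguments. Unset Strict Implicit. Unset Printing Implicit Defensive.

Section Decomp.
Variable R : realType.
Local Notation C := (R[i]).
Variable T : finType.

Definition qf (A : T -> T -> C) (u v : T -> C) : C :=
  \sum_x \sum_y Num.conj (u x) * A x y * v y.
Definition delta (x : T) : T -> C := fun a => (a == x)%:R.
Definition vadd (u v : T -> C) : T -> C := fun a => u a + v a.
Definition vsc (c : C) (u : T -> C) : T -> C := fun a => c * u a.

Lemma sum_delta_l (x : T) (F : T -> C) : \sum_a (a == x)%:R * F a = F x.
Proof.
rewrite (bigD1 x) //= eqxx mul1r big1 ?addr0 // => a /negbTE ->; by rewrite mul0r.
Qed.
Lemma sum_delta_r (x : T) (F : T -> C) : \sum_a F a * (a == x)%:R = F x.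
Proof. by rewrite -[RHS](sum_delta_l x); apply: eq_bigr => a _; rewrite mulrC. Qed.

Lemma qf_addl (A : Op R T) u u' v : qf A (vadd u u') v = qf A u v + qf A u' v.
Proof.
rewrite /qf -big_split; apply: eq_bigr => x _; rewrite -big_split; apply: eq_bigr => y _.
by rewrite /vadd rmorphD !mulrDl.
Qed.
Lemma qf_addr (A : Op R T) u v v' : qf A u (vadd v v') = qf A u v + qf A u v'.
Proof.
rewrite /qf -big_split; apply: eq_bigr => x _; rewrite -big_split; apply: eq_bigr => y _.
by rewrite /vadd mulrDr.
Qed.
Lemma qf_scl (A : Op R T) c u v : qf A (vsc c u) v = Num.conj c * qf A u v.
Proof.
rewrite /qf mulr_sumr; apply: eq_bigr => x _; rewrite mulr_sumr; apply: eq_bigr => y _.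
by rewrite /vsc rmorphM !mulrA.
Qed.
Lemma qf_scr (A : Op R T) c u v : qf A u (vsc c v) = c * qf A u v.
Proof.
rewrite /qf mulr_sumr; apply: eq_bigr => x _; rewrite mulr_sumr; apply: eq_bigr => y _.
by rewrite /vsc mulrCA.
Qed.
Lemma qf_delta (A : Op R T) x y : qf A (delta x) (delta y) = A x y.
Proof.
rewrite /qf /delta.
rewrite (eq_bigr (fun a => (a == x)%:R * \sum_b A a b * (b == y)%:R)); last first.
  move=> a _; rewrite mulr_sumr; apply: eq_bigr => b _.
  by rewrite rmorph_nat !mulrA.
rewrite sum_delta_l; exact: sum_delta_r.
Qed.
Lemma qf_delta_l (A : Op R T) x v : qf A (delta x) v = \sum_y A x y * v y.
Proof.
rewrite /qf /delta.
rewrite (eq_bigr (fun a => (a == x)%:R * \sum_b A a b * v b)); last first.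
  move=> a _; rewrite mulr_sumr; apply: eq_bigr => b _.
  by rewrite rmorph_nat !mulrA.
exact: sum_delta_l.
Qed.
Lemma qf_delta_r (A : Op R T) x v : qf A v (delta x) = \sum_y Num.conj (v y) * A y x.
Proof.
rewrite /qf /delta; apply: eq_bigr => a _; exact: sum_delta_r.
Qed.

Lemma psd_qf (A : Op R T) : psd A -> forall v, 0 <= qf A v v.
Proof. by move=> h v; apply: h. Qed.

Lemma psd_diag (A : Op R T) x : psd A -> 0 <= A x x.
Proof. by move=> h; rewrite -qf_delta; apply: psd_qf. Qed.

Lemma conjD (a b : C) : Num.conj (a + b) = Num.conj a + Num.conj b.
Proof. exact: rmorphD. Qed.
Lemma conjM (a b : C) : Num.conj (a * b) = Num.conj a * Num.conj b.
Proof. exact: rmorphM. Qed.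
Lemma conjN (a : C) : Num.conj (- a) = - Num.conj a.
Proof. exact: rmorphN. Qed.
Lemma conjB (a b : C) : Num.conj (a - b) = Num.conj a - Num.conj b.
Proof. exact: rmorphB. Qed.
Lemma conj1 : Num.conj (1 : C) = 1.
Proof. exact: rmorph1. Qed.
Lemma conj_nat n : Num.conj (n%:R : C) = n%:R.
Proof. exact: rmorph_nat. Qed.
Lemma conj_sum (I : Type) (r : seq I) (P : pred I) (F : I -> C) :
  Num.conj (\sum_(i <- r | P i) F i) = \sum_(i <- r | P i) Num.conj (F i).
Proof. exact: rmorph_sum. Qed.

Lemma conjV (a : C) : Num.conj (a^-1) = (Num.conj a)^-1.
Proof. exact: fmorphV. Qed.

Lemma lin_from (l r L R' : C) : l = r -> L - R' = l - r -> L = R'.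
Proof. by move=> e; rewrite e subrr => /eqP; rewrite subr_eq0 => /eqP. Qed.

Lemma ge0_conj (z : C) : 0 <= z -> Num.conj z = z.
Proof. exact: geC0_conj. Qed.

Lemma qf2 (A : Op R T) x y t : qf A (vadd (delta x) (vsc t (delta y))) (vadd (delta x) (vsc t (delta y)))
  = A x x + t * A x y + Num.conj t * A y x + Num.conj t * t * A y y.
Proof.
rewrite !qf_addl !qf_addr !qf_scl !qf_scr !qf_delta.
by rewrite !addrA mulrA.
Qed.

Lemma psd_herm (A : Op R T) x y : psd A -> A y x = Num.conj (A x y).
Proof.
move=> hA.
have h1 := psd_qf hA (vadd (delta x) (vsc 1 (delta y))).
have h2 := psd_qf hA (vadd (delta x) (vsc 'i (delta y))).
rewrite qf2 in h1; rewrite qf2 in h2.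
set a := A x y in h1 h2 *; set b := A y x in h1 h2 *.
have cx := ge0_conj (psd_diag x hA); have cy := ge0_conj (psd_diag y hA).
have E1 : Num.conj a + Num.conj b = a + b.
  have := ge0_conj h1; rewrite conj1 !mul1r !conjD cx cy.
  by move=> e; apply: (lin_from e); ring.
have ii : Num.conj 'i * 'i = 1 :> C by rewrite conjCi mulNr -expr2 sqrCi opprK.
have E2 : Num.conj a - Num.conj b = - a + b.
  have := ge0_conj h2; rewrite ii mul1r !conjD !conjM conjCK cx cy conjCi.
  move=> e.
  have e' : 'i * (Num.conj a - Num.conj b) = 'i * (- a + b).
    have : - 'i * Num.conj a + 'i * Num.conj b = 'i * a + - 'i * b.
      by apply: (lin_from e); ring.
    move=> e2; rewrite -[LHS]opprK -[RHS]opprK; congr (- _).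
    transitivity (- 'i * Num.conj a + 'i * Num.conj b); first by ring.
    by rewrite e2; ring.
  by move/(mulfI (neq0Ci C)): e'.
have : 2%:R * Num.conj b = 2%:R * a.
  have -> : 2%:R * Num.conj b = (Num.conj a + Num.conj b) - (Num.conj a - Num.conj b) by ring.
  by rewrite E1 E2; ring.
have n2 : (2%:R : C) != 0 by rewrite pnatr_eq0.
move/(mulfI n2) => h.
by rewrite -[b]conjCK h.
Qed.


Lemma psd_zero_row (A : Op R T) x y : psd A -> A x x = 0 -> A x y = 0.
Proof.
move=> hA h0; set a := A x y.
have hb : A y x = Num.conj a := psd_herm x y hA.
apply/eqP; apply: contraT => an0.
have n : a * Num.conj a != 0 by rewrite mulf_neq0 // conjC_eq0.
have n2 : 2%:R * (a * Num.conj a) != 0 by rewrite mulf_neq0 // pnatr_eq0.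
set s := (A y y + 1) / (2%:R * (a * Num.conj a)).
have cs : Num.conj s = s.
  rewrite /s conjM conjV conjD conj1 (ge0_conj (psd_diag y hA)) conjM conj_nat conjM conjCK.
  by rewrite [Num.conj a * a]mulrC.
have e : s * (2%:R * (a * Num.conj a)) = A y y + 1 by rewrite /s mulfVK.
have := psd_qf hA (vadd (delta y) (vsc (- s * a) (delta x))); rewrite qf2 h0 hb mulr0 addr0.
rewrite conjM conjN cs.
have -> : A y y + - s * a * Num.conj a + - s * Num.conj a * a = A y y - s * (2%:R * (a * Num.conj a)) by ring.
by rewrite e opprD addrA subrr add0r ler0N1.
Qed.

Lemma psd_zero_col (A : Op R T) x y : psd A -> A x x = 0 -> A y x = 0.
Proof. by move=> hA h0; rewrite (psd_herm x y hA) (psd_zero_row y hA h0) conjC0. Qed.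


Lemma qf_rank1 (A : Op R T) (w : T -> C) v :
  qf (fun y z => A y z - w y * Num.conj (w z)) v v
  = qf A v v - (\sum_x Num.conj (v x) * w x) * Num.conj (\sum_x Num.conj (v x) * w x).
Proof.
rewrite conj_sum mulr_suml /qf -sumrB; apply: eq_bigr => x _.
rewrite mulr_sumr -sumrB; apply: eq_bigr => y _.
rewrite conjM conjCK; ring.
Qed.

Lemma qf_plus_delta (A : Op R T) v t x0 :
  qf A (vadd v (vsc t (delta x0))) (vadd v (vsc t (delta x0)))
  = qf A v v + t * qf A v (delta x0) + Num.conj t * qf A (delta x0) v
    + Num.conj t * t * A x0 x0.
Proof.
rewrite !qf_addl !qf_addr !qf_scl !qf_scr qf_delta; ring.
Qed.

Lemma schur_psd (A : Op R T) x0 : psd A -> A x0 x0 != 0 ->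
  psd (fun y z => A y z - (A y x0 / sqrtC (A x0 x0)) * Num.conj (A z x0 / sqrtC (A x0 x0))).
Proof.
move=> hA rn0 v; rewrite -/(qf _ v v) qf_rank1.
set r := A x0 x0 in rn0 *.
have r0 : 0 <= r := psd_diag x0 hA.
set sr := sqrtC r.
have csr : Num.conj sr = sr by apply: ge0_conj; rewrite sqrtC_ge0.
have srr : sr * sr = r by rewrite -expr2 sqrtCK.
have srn0 : sr != 0 by rewrite sqrtC_eq0.
have cr : Num.conj r = r := ge0_conj r0.
set beta := qf A (delta x0) v.
have hb1 : qf A v (delta x0) = Num.conj beta.
  rewrite qf_delta_r /beta qf_delta_l conj_sum; apply: eq_bigr => y _.
  by rewrite conjM (psd_herm x0 y hA) mulrC.
have hs : \sum_x Num.conj (v x) * (A x x0 / sr) = Num.conj beta / sr.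
  by rewrite -hb1 qf_delta_r mulr_suml; apply: eq_bigr => y _; rewrite mulrA.
rewrite hs conjM conjV conjCK csr.
have := psd_qf hA (vadd v (vsc (- beta / r) (delta x0))).
rewrite qf_plus_delta hb1 -/beta conjM conjN conjV cr.
have -> : qf A v v + - beta / r * Num.conj beta + - Num.conj beta / r * beta +
   - Num.conj beta / r * (- beta / r) * r = qf A v v - Num.conj beta / (sr * sr) * beta.
  by rewrite srr; field.
have -> : Num.conj beta / sr * (beta / sr) = Num.conj beta / (sr * sr) * beta.
  by rewrite invfM; ring.
by [].
Qed.


Lemma decomp_aux n : forall (S : {set T}) (A : Op R T), #|S| = n -> psd A ->
  (forall x y, x \notin S -> A x y = 0) ->
  exists vs : seq (T -> C), forall x y, A x y = \sum_(v <- vs) v x * Num.conj (v y).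
Proof.
elim: n => [|n IH] S A hS hA hsupp.
  exists [::] => x y; rewrite big_nil; apply: hsupp.
  by move/eqP: hS; rewrite cards_eq0 => /eqP ->; rewrite inE.
have : S != set0 by rewrite -card_gt0 hS.
case/set0Pn => x0 Hx0.
have hS' : #|S :\ x0| = n.
  by move: hS; rewrite (cardsD1 x0) Hx0 add1n => -[].
have supp' : forall B : Op R T, (forall x y, x \notin S -> B x y = 0) ->
    (forall y, B x0 y = 0) -> forall x y, x \notin S :\ x0 -> B x y = 0.
  move=> B h1 h2 x y; rewrite !inE negb_and negbK => /orP[/eqP ->|]; first exact: h2.
  exact: h1.
have [r0|rn0] := eqVneq (A x0 x0) 0.
  apply: (IH (S :\ x0)) => //; apply: supp' => // y.
  exact: psd_zero_row hA r0.
set sr := sqrtC (A x0 x0).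
set w := fun y => A y x0 / sr.
set A' := fun y z => A y z - w y * Num.conj (w z).
have hA' : psd A' by exact: schur_psd.
have r0 : 0 <= A x0 x0 := psd_diag x0 hA.
have csr : Num.conj sr = sr by apply: ge0_conj; rewrite sqrtC_ge0.
have srr : sr * sr = A x0 x0 by rewrite -expr2 sqrtCK.
have srn0 : sr != 0 by rewrite sqrtC_eq0.
have [vs hvs] : exists vs : seq (T -> C), forall x y, A' x y = \sum_(v <- vs) v x * Num.conj (v y).
  apply: (IH (S :\ x0)) => //; apply: supp'.
    by move=> x y hx; rewrite /A' /w (hsupp x y hx) (hsupp x x0 hx) !mul0r subr0.
  move=> y; rewrite /A' /w conjM conjV csr -(psd_herm y x0 hA).
  rewrite -srr; field.
  by [].
exists (w :: vs) => x y; rewrite big_cons -hvs /A'; ring.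
Qed.

Lemma psd_decomp (A : Op R T) : psd A ->
  exists vs : seq (T -> C), forall x y, A x y = \sum_(v <- vs) v x * Num.conj (v y).
Proof.
move=> hA; apply: (@decomp_aux #|[set: T]| [set: T]) => // x y.
by rewrite inE.
Qed.

End Decomp.


Section Struct.
Variable R : realType.
Local Notation C := (R[i]).

Lemma sum_pair (A B : finType) (F : A * B -> C) :
  \sum_p F p = \sum_a \sum_b F (a, b).
Proof. by rewrite pair_big; apply: eq_bigr => -[]. Qed.

Lemma sum_only (A : finType) (a0 : A) (F : A -> C) :
  (forall a, a != a0 -> F a = 0) -> \sum_a F a = F a0.
Proof. by move=> h; rewrite (bigD1 a0) //= big1 ?addr0 // => a /h. Qed.

Lemma sum_fix12 (A B D : finType) (a0 : A) (b0 : B) (F : A * B * D -> C) :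
  (forall z, z.1 != (a0, b0) -> F z = 0) -> \sum_z F z = \sum_c F (a0, b0, c).
Proof.
move=> h; rewrite sum_pair (sum_only (a0:=(a0, b0))) // => ab hab.
by apply: big1 => c _; apply: h.
Qed.

Lemma band_nat (a b : bool) : ((a && b)%:R : C) = a%:R * b%:R.
Proof. by case: a; case: b; rewrite ?mul1r ?mul0r. Qed.

Variable d : nat.
Local Notation I := ('I_d).

Lemma Omega_eq (rho : Op R (I * I)%type) (w x z y : I * I * I) :
  Omega rho (w, x) (z, y) =
  ((x.1.1 == w.1.1) && (y.1.1 == z.1.1))%:R / d%:R *
  (((x.1.2 == w.1.2) && (y.1.2 == z.1.2))%:R / d%:R) * rho (w.2, x.2) (z.2, y.2).
Proof. by case: w => [[? ?] ?]; case: x => [[? ?] ?]; case: z => [[? ?] ?]; case: y => [[? ?] ?]. Qed.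

Lemma postM_eq1 K (M : 'I_K -> Op R (I * I * I)%type) rho i x y :
  postM M rho i x y = \sum_z \sum_w M i z w * Omega rho (w, x) (z, y).
Proof.
rewrite /postM /ptr1 /opmul; apply: eq_bigr => z _.
rewrite sum_pair; apply: eq_bigr => w _.
rewrite (sum_only (a0:=x)).
  by rewrite /kron /opid /= eqxx mulr1.
by move=> b hb; rewrite /kron /opid /= eq_sym (negbTE hb) mulr0 mul0r.
Qed.

Lemma postM_eq K (M : 'I_K -> Op R (I * I * I)%type) rho i x y :
  postM M rho i x y = (d%:R ^+ 2)^-1 *
    \sum_zt \sum_wt M i (y.1.1, y.1.2, zt) (x.1.1, x.1.2, wt) * rho (wt, x.2) (zt, y.2).
Proof.
rewrite postM_eq1 (sum_fix12 (a0:=y.1.1) (b0:=y.1.2)).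
  rewrite mulr_sumr; apply: eq_bigr => zt _.
  rewrite (sum_fix12 (a0:=x.1.1) (b0:=x.1.2)).
    rewrite mulr_sumr; apply: eq_bigr => wt _.
    rewrite Omega_eq /= !eqxx /= !mul1r expr2 invfM; ring.
  case=> [[w1 w2] wt] hw; rewrite Omega_eq /=; move: hw; rewrite /= xpair_eqE negb_and => hw.
  by case/orP: hw => /negbTE hw; rewrite eq_sym in hw; rewrite hw ?andbF /=; ring.
case=> [[z1 z2] zt] hz; apply: big1 => w _; rewrite Omega_eq /=.
move: hz; rewrite /= xpair_eqE negb_and => hz.
by case/orP: hz => /negbTE hz; rewrite eq_sym in hz; rewrite hz ?andbF /=; ring.
Qed.


Lemma sum4 (A B D E : Type) (ra : seq A) (rb : seq B) (rc : seq D) (re : seq E)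
  (F : A -> B -> D -> E -> C) :
  \sum_(a <- ra) \sum_(b <- rb) \sum_(c <- rc) \sum_(e <- re) F a b c e =
  \sum_(c <- rc) \sum_(e <- re) \sum_(b <- rb) \sum_(a <- ra) F a b c e.
Proof.
under eq_bigr => a _ do rewrite exchange_big.
under eq_bigr => a _ do under eq_bigr => c _ do rewrite exchange_big.
rewrite exchange_big.
under eq_bigr => c _ do rewrite exchange_big.
by under eq_bigr => c _ do under eq_bigr => e _ do rewrite exchange_big.
Qed.

Definition hvec (m : (I * I * I)%type -> C) (r : (I * I)%type -> C) : (I * I * I)%type -> C :=
  fun x => (d%:R)^-1 * \sum_wt Num.conj (m (x.1.1, x.1.2, wt)) * r (wt, x.2).

Lemma postM_decomp K (M : 'I_K -> Op R (I * I * I)%type) rho i ms rs :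
  (forall a b, M i a b = \sum_(m <- ms) m a * Num.conj (m b)) ->
  (forall s t, rho s t = \sum_(r <- rs) r s * Num.conj (r t)) ->
  forall x y, postM M rho i x y = \sum_(m <- ms) \sum_(r <- rs) hvec m r x * Num.conj (hvec m r y).
Proof.
move=> hM hr x y; rewrite postM_eq.
transitivity (\sum_zt \sum_wt \sum_(m <- ms) \sum_(r <- rs)
   (d%:R ^+ 2)^-1 * (m (y.1.1, y.1.2, zt) * Num.conj (m (x.1.1, x.1.2, wt))) *
   (r (wt, x.2) * Num.conj (r (zt, y.2)))).
  rewrite mulr_sumr; apply: eq_bigr => zt _; rewrite mulr_sumr; apply: eq_bigr => wt _.
  rewrite hM hr mulr_suml mulr_sumr; apply: eq_bigr => m _.
  by rewrite mulr_sumr mulr_sumr; apply: eq_bigr => r _; ring.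
rewrite sum4; apply: eq_bigr => m _; apply: eq_bigr => r _.
rewrite /hvec conjM conj_sum conjV conj_nat -mulrA mulr_suml mulr_sumr; apply: eq_bigr => wt _.
rewrite !mulr_sumr; apply: eq_bigr => zt _.
rewrite !conjM conjCK expr2 invfM; ring.
Qed.

End Struct.


Section Tr.
Variable R : realType.
Local Notation C := (R[i]).
Variable d : nat.
Local Notation I := ('I_d).

Lemma sum_fix1 (A B : finType) (a0 : A) (F : (A * B)%type -> C) :
  (forall p, p.1 != a0 -> F p = 0) -> \sum_p F p = \sum_b F (a0, b).
Proof.
move=> h; rewrite sum_pair (sum_only (a0:=a0)) // => a ha.
by apply: big1 => b _; apply: h.
Qed.

Definition Phi (U : Op R I) (X : Op R (I * I)%type) : C :=
  (d%:R)^-1 * \sum_a \sum_c \sum_h \sum_f U c f * X (c, f) (a, h) * Num.conj (U a h).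

Lemma trace_Phi (U : Op R I) (X : Op R (I * I)%type) :
  optr (opmul (psiplus R (d := d))
      (opmul (opmul (kron (opid R (T := I)) U) X) (opadj (kron (opid R (T := I)) U))))
  = Phi U X.
Proof.
rewrite /optr /Phi mulr_sumr sum_pair; apply: eq_bigr => a _.
rewrite (sum_only (a0 := a)); last first.
  move=> b hb; rewrite /opmul; apply: big1 => z _.
  by rewrite /psiplus /= eq_sym (negbTE hb) /= mul0r mul0r.
rewrite /opmul mulr_sumr sum_pair; apply: eq_bigr => c _.
rewrite (sum_only (a0 := c)); last first.
  move=> b hb; rewrite /psiplus /= eq_sym (negbTE hb) andbF /= mul0r mul0r //.
rewrite /psiplus /= !eqxx /= mul1r; congr (_ * _).
rewrite (sum_fix1 (a0 := a)); last first.
  by move=> q hq; rewrite eq_sym in hq; rewrite /opadj /kron /opid /= (negbTE hq) mul0r conjC0 mulr0.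
apply: eq_bigr => h _.
rewrite (sum_fix1 (a0 := c)); last first.
  by move=> p hp; rewrite eq_sym in hp; rewrite /kron /opid /= (negbTE hp) !mul0r.
rewrite mulr_suml; apply: eq_bigr => f _.
by rewrite /opadj /kron /opid /= !eqxx conjM conj_nat !mul1r.
Qed.


Lemma Phi_ext U X Y : (forall p q, X p q = Y p q) -> Phi U X = Phi U Y.
Proof.
move=> h; rewrite /Phi; congr (_ * _).
apply: eq_bigr => a _; apply: eq_bigr => c _; apply: eq_bigr => h' _; apply: eq_bigr => f _.
by rewrite h.
Qed.

Lemma pull_out4 (K : Type) (ks : seq K) (G : I -> I -> I -> I -> K -> C) :
  \sum_a \sum_c \sum_h \sum_f \sum_(k <- ks) G a c h f k =
  \sum_(k <- ks) \sum_a \sum_c \sum_h \sum_f G a c h f k.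
Proof.
under eq_bigr => a _ do under eq_bigr => c _ do under eq_bigr => h _ do rewrite exchange_big.
under eq_bigr => a _ do under eq_bigr => c _ do rewrite exchange_big.
under eq_bigr => a _ do rewrite exchange_big.
by rewrite exchange_big.
Qed.

Lemma Phi_sum U (K : Type) (ks : seq K) (F : K -> Op R (I * I)%type) :
  Phi U (fun p q => \sum_(k <- ks) F k p q) = \sum_(k <- ks) Phi U (F k).
Proof.
rewrite /Phi -mulr_sumr; congr (_ * _).
rewrite -pull_out4.
apply: eq_bigr => a _; apply: eq_bigr => c _; apply: eq_bigr => h _; apply: eq_bigr => f _.
by rewrite mulr_sumr mulr_suml.
Qed.

Definition Sv (U : Op R I) (g : (I * I)%type -> C) : C := \sum_c \sum_f U c f * g (c, f).

Lemma Phi_rank1 U (g : (I * I)%type -> C) :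
  Phi U (fun p q => g p * Num.conj (g q)) = (d%:R)^-1 * (Sv U g * Num.conj (Sv U g)).
Proof.
rewrite /Phi; congr (_ * _).
rewrite mulrC /Sv conj_sum mulr_suml; apply: eq_bigr => a _.
rewrite exchange_big conj_sum mulr_suml; apply: eq_bigr => h _.
rewrite mulr_sumr; apply: eq_bigr => c _.
rewrite mulr_sumr; apply: eq_bigr => f _.
rewrite conjM; ring.
Qed.


Definition G1 (U : Op R I) (h : (I * I * I)%type -> C) : C :=
  (d%:R)^-1 * \sum_e (Sv U (fun p => h (p.1, e, p.2)) * Num.conj (Sv U (fun p => h (p.1, e, p.2)))).
Definition G2 (U : Op R I) (h : (I * I * I)%type -> C) : C :=
  (d%:R)^-1 * \sum_e (Sv U (fun p => h (e, p.1, p.2)) * Num.conj (Sv U (fun p => h (e, p.1, p.2)))).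

Lemma Phi_decomp U (ms : seq ((I * I * I)%type -> C)) (rs : seq ((I * I)%type -> C))
   (F : I -> (I * I)%type -> (I * I * I)%type) :
  Phi U (fun p q => \sum_e \sum_(m <- ms) \sum_(r <- rs) hvec m r (F e p) * Num.conj (hvec m r (F e q)))
  = \sum_(m <- ms) \sum_(r <- rs) (d%:R)^-1 * \sum_e (Sv U (fun p => hvec m r (F e p)) * Num.conj (Sv U (fun p => hvec m r (F e p)))).
Proof.
rewrite (@Phi_sum U _ (index_enum I) (fun e p q => \sum_(m <- ms) \sum_(r <- rs) hvec m r (F e p) * Num.conj (hvec m r (F e q)))).
under eq_bigr => e _ do rewrite (@Phi_sum U _ ms (fun m p q => \sum_(r <- rs) hvec m r (F e p) * Num.conj (hvec m r (F e q)))).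
under eq_bigr => e _ do under eq_bigr => m _ do rewrite (@Phi_sum U _ rs (fun r p q => hvec m r (F e p) * Num.conj (hvec m r (F e q)))).
under eq_bigr => e _ do under eq_bigr => m _ do under eq_bigr => r _ do rewrite (Phi_rank1 U (fun p => hvec m r (F e p))).
rewrite exchange_big; apply: eq_bigr => m _.
rewrite exchange_big; apply: eq_bigr => r _.
by rewrite mulr_sumr.
Qed.

End Tr.


Section Real.
Variable R : realType.

Lemma quad_form (al be ga a b : R) : 0 <= al -> 0 <= ga -> be ^+ 2 <= al * ga ->
  0 <= al * a ^+ 2 - 2 * be * a * b + ga * b ^+ 2.
Proof.
move=> ha hg hb.
have [h0|hpos] := eqVneq (al + ga) 0.
  have al0 : al = 0 by lra.
  have ga0 : ga = 0 by lra.
  have : be ^+ 2 <= 0 by rewrite al0 mul0r in hb.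
  move=> hb0; have be0 : be = 0 by nra.
  by rewrite al0 ga0 be0; lra.
have hp : 0 < al + ga by rewrite lt0r hpos /= addr_ge0.
have key : (al + ga) * (al * a ^+ 2 - 2 * be * a * b + ga * b ^+ 2) =
   (al * a - be * b) ^+ 2 + (ga * b - be * a) ^+ 2 + (al * ga - be ^+ 2) * (a ^+ 2 + b ^+ 2).
  by ring.
have : 0 <= (al + ga) * (al * a ^+ 2 - 2 * be * a * b + ga * b ^+ 2).
  rewrite key; apply: addr_ge0; first by apply: addr_ge0; apply: sqr_ge0.
  apply: mulr_ge0; first lra.
  by apply: addr_ge0; apply: sqr_ge0.
by rewrite pmulr_rge0.
Qed.


Lemma final_real (d p X A B m : R) : 2 <= d -> 0 <= p -> p <= 1 -> 0 <= A -> 0 <= B ->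
  (forall e s t, 0 <= e ^+ 2 * X + s ^+ 2 * A + t ^+ 2 * B - 2 * e * s * A - 2 * e * t * B + 2 * s * t * m) ->
  m ^+ 2 <= A * B / d ^+ 2 ->
  p * A + (1 - p) * B <= (1 + Num.sqrt (1 + 4%:R * (d ^+ 2 - 1) * (p - 1) * p / d ^+ 2)) / 2%:R * X.
Proof.
move=> hd hp0 hp1 hA hB H1 H2.
have d2p : 0 < d ^+ 2 by apply: exprn_gt0; lra.
set c := (d ^+ 2)^-1.
have hc0 : 0 < c by rewrite invr_gt0.
have hc1 : c <= 1.
  have h : (1:R) <= d ^+ 2 by clear -hd; rewrite expr2; nra.
  by rewrite invf_le1.
have eD : 1 + 4%:R * (d ^+ 2 - 1) * (p - 1) * p / d ^+ 2 = 1 - 4 * (1 - c) * p * (1 - p).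
  rewrite /c; field; lra.
rewrite eD.
have hpp : 0 <= p * (1 - p) by apply: mulr_ge0; lra.
have hcpp : 0 <= c * (p * (1 - p)) by apply: mulr_ge0; lra.
have h4 : 4 * (p * (1 - p)) <= 1 by have := sqr_ge0 (2 * p - 1); nra.
have hDel : 0 <= 1 - 4 * (1 - c) * p * (1 - p).
  have -> : 1 - 4 * (1 - c) * p * (1 - p) = 1 - 4 * (p * (1 - p)) + 4 * (c * (p * (1 - p))) by ring.
  lra.
set q := Num.sqrt _.
have hq0 : 0 <= q by apply: sqrtr_ge0.
have hq2 : q ^+ 2 = 1 - 4 * (1 - c) * p * (1 - p) by rewrite sqr_sqrtr.
set lam := (1 + q) / 2%:R.
have elam : lam ^+ 2 - lam + (1 - c) * p * (1 - p) = 0.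
  rewrite /lam.
  have -> : ((1 + q) / 2%:R) ^+ 2 - (1 + q) / 2%:R = (q ^+ 2 - 1) / 4 by field.
  by rewrite hq2; field.
have hq_abs : (2 * p - 1) ^+ 2 <= q ^+ 2 by rewrite hq2; nra.
have hlp : p <= lam.
  rewrite /lam; have : 2 * p - 1 <= q.
    have [hneg|hpos] := lerP (2 * p - 1) 0; first lra.
    nra.
  lra.
have hl1p : 1 - p <= lam.
  rewrite /lam; have : 1 - 2 * p <= q.
    have [hneg|hpos] := lerP (1 - 2 * p) 0; first lra.
    nra.
  lra.
have hXA : A <= X by have := H1 1 1 0; lra.
have hXB : B <= X by have := H1 1 0 1; lra.
have H2' : m ^+ 2 <= c * (A * B) by rewrite mulrC.
set D := A * B - m ^+ 2.
have hD0 : (1 - c) * (A * B) <= D by rewrite /D; nra.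
have hAB : 0 <= A * B by apply: mulr_ge0.
have HD : 0 <= D * (D * X - A * B * (A + B - 2 * m)).
  have := H1 D (B * (A - m)) (A * (B - m)).
  suff -> : D ^+ 2 * X + (B * (A - m)) ^+ 2 * A + (A * (B - m)) ^+ 2 * B - 2 * D * (B * (A - m)) * A -
    2 * D * (A * (B - m)) * B + 2 * (B * (A - m)) * (A * (B - m)) * m = D * (D * X - A * B * (A + B - 2 * m)) by [].
  by rewrite /D; ring.
have [Dz|Dnz] := eqVneq D 0.
  have hAB0 : A * B = 0.
    apply/eqP; rewrite eq_le hAB andbT.
    have : (1 - c) * (A * B) <= 0 by rewrite -Dz.
    case: (ltrP c 1) => hc.
      by rewrite pmulr_rle0 // subr_gt0.
    have c1 : c = 1 by lra.
    move: c1; rewrite /c => c1.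
    have : d ^+ 2 = 1 by rewrite -[d ^+ 2]invrK c1 invr1.
    nra.
  move/eqP: hAB0; rewrite mulf_eq0 => /orP[/eqP A0|/eqP B0].
    rewrite A0 mulr0 add0r.
    have : 0 <= 1 - p by lra.
    have : 0 <= lam by lra.
    nra.
  rewrite B0 mulr0 addr0; nra.
have Dp : 0 < D by rewrite lt0r Dnz /=; nra.
have HDX : A * B * (A + B - 2 * m) <= D * X.
  by move: HD; rewrite pmulr_rge0 // subr_ge0.
have hm2 : m ^+ 2 < A * B by rewrite /D in Dp; lra.
have Ap : 0 < A.
  rewrite lt0r; apply/andP; split => //; apply/eqP => A0.
  by move: hm2; rewrite A0 mul0r; have := sqr_ge0 m; lra.
have Bp : 0 < B.
  rewrite lt0r; apply/andP; split => //; apply/eqP => B0.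
  by move: hm2; rewrite B0 mulr0; have := sqr_ge0 m; lra.
set a := Num.sqrt A; set b := Num.sqrt B.
have ha : a ^+ 2 = A by rewrite sqr_sqrtr //; lra.
have hb : b ^+ 2 = B by rewrite sqr_sqrtr //; lra.
have ap : 0 < a by rewrite sqrtr_gt0.
have bp : 0 < b by rewrite sqrtr_gt0.
set mu := m / (a * b).
have hm : m = mu * (a * b) by rewrite /mu divfK // mulf_neq0 // gt_eqF.
have hmu2 : mu ^+ 2 <= c.
  have : mu ^+ 2 * (A * B) <= c * (A * B).
    have -> : mu ^+ 2 * (A * B) = m ^+ 2 by rewrite hm -ha -hb; ring.
    exact: H2'.
  by rewrite ler_pM2r // mulr_gt0.
have hG : 0 <= (lam - p * (1 - mu ^+ 2)) * a ^+ 2 - 2 * (lam * mu) * a * b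
               + (lam - (1 - p) * (1 - mu ^+ 2)) * b ^+ 2.
  apply: quad_form.
  - have : 0 <= mu ^+ 2 := sqr_ge0 mu. nra.
  - have : 0 <= mu ^+ 2 := sqr_ge0 mu. nra.
  - have e : (lam - p * (1 - mu ^+ 2)) * (lam - (1 - p) * (1 - mu ^+ 2)) - (lam * mu) ^+ 2
       = (1 - mu ^+ 2) * (p * (1 - p)) * (c - mu ^+ 2) + (1 - mu ^+ 2) * (lam ^+ 2 - lam + (1 - c) * p * (1 - p)).
      by ring.
    rewrite -subr_ge0 e elam mulr0 addr0.
    apply: mulr_ge0; last lra.
    apply: mulr_ge0; last nra.
    lra.
have key : D * (p * A + (1 - p) * B) <= lam * (A * B * (A + B - 2 * m)).
  rewrite -subr_ge0.
  have -> : lam * (A * B * (A + B - 2 * m)) - D * (p * A + (1 - p) * B) =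
    (a * b) ^+ 2 * ((lam - p * (1 - mu ^+ 2)) * a ^+ 2 - 2 * (lam * mu) * a * b
               + (lam - (1 - p) * (1 - mu ^+ 2)) * b ^+ 2).
    by rewrite /D hm -ha -hb; ring.
  by apply: mulr_ge0 => //; apply: sqr_ge0.
have hl0 : 0 <= lam by lra.
have : D * (p * A + (1 - p) * B) <= D * (lam * X).
  apply: (le_trans key).
  rewrite [X in _ <= X]mulrCA; apply: ler_wpM2l => //.
rewrite ler_pM2l //.
Qed.

End Real.


Section IP.
Variable R : realType.
Local Notation C := (R[i]).
Variable T : finType.

Definition ip (f g : T -> C) : C := \sum_x Num.conj (f x) * g x.

Lemma ip_ge0 f : 0 <= ip f f.
Proof. by apply: sumr_ge0 => x _; rewrite mulrC; apply: mul_conjC_ge0. Qed.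

Lemma ip_conj f g : Num.conj (ip f g) = ip g f.
Proof. by rewrite /ip conj_sum; apply: eq_bigr => x _; rewrite conjM conjCK mulrC. Qed.

Lemma ip_eq0 f : ip f f = 0 -> forall x, f x = 0.
Proof.
move=> h x; have := h; rewrite /ip => /eqP; rewrite psumr_eq0 => [/allP hx|y _].
  have := hx x (mem_index_enum x); rewrite mulf_eq0 conjC_eq0 orbb.
  by move/eqP.
by rewrite mulrC; apply: mul_conjC_ge0.
Qed.

Lemma ip_expand (f g : T -> C) (a b : C) :
  ip (fun x => a * f x - b * g x) (fun x => a * f x - b * g x) =
  Num.conj a * a * ip f f - Num.conj a * b * ip f g - Num.conj b * a * ip g f + Num.conj b * b * ip g g.
Proof.
rewrite /ip !mulr_sumr -!sumrB -big_split /=; apply: eq_bigr => x _.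
rewrite conjB !conjM; ring.
Qed.

Lemma CS (f g : T -> C) : ip g f * Num.conj (ip g f) <= ip f f * ip g g.
Proof.
have hY : 0 <= ip g g := ip_ge0 g.
have cY : Num.conj (ip g g) = ip g g := ge0_conj hY.
have E := ip_expand f g (ip g g) (ip g f).
rewrite cY -(ip_conj g f) in E.
have E' : ip (fun x => ip g g * f x - ip g f * g x) (fun x => ip g g * f x - ip g f * g x) =
   ip g g * (ip g g * ip f f - ip g f * Num.conj (ip g f)).
  by rewrite E; ring.
have [Y0|Yn0] := eqVneq (ip g g) 0.
  have g0 := ip_eq0 Y0.
  have -> : ip g f = 0 by rewrite /ip big1 // => x _; rewrite g0 conjC0 mul0r.
  by rewrite mul0r mulr_ge0 // ip_ge0.
have Yp : 0 < ip g g by rewrite lt0r Yn0.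
have := ip_ge0 (fun x => ip g g * f x - ip g f * g x).
by rewrite E' pmulr_rge0 // subr_ge0 [X in _ <= X -> _]mulrC.
Qed.

End IP.


Section Asm.
Variable R : realType.
Local Notation C := (R[i]).
Variable d : nat.
Local Notation I := ('I_d).
Variable K : nat.
Variable M : 'I_K -> Op R (I * I * I)%type.
Variable U : 'I_K -> 'I_2 -> Op R I.
Variable rho : Op R (I * I)%type.
Variable ms : 'I_K -> seq ((I * I * I)%type -> C).
Variable rs : seq ((I * I)%type -> C).
Hypothesis hM : forall i a b, M i a b = \sum_(m <- ms i) m a * Num.conj (m b).
Hypothesis hr : forall s t, rho s t = \sum_(r <- rs) r s * Num.conj (r t).

Lemma Fsucc0_eq : Fsucc M U rho ord0 =
  \sum_i \sum_(m <- ms i) \sum_(r <- rs) G1 (U i ord0) (hvec m r).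
Proof.
rewrite /Fsucc; apply: eq_bigr => i _; rewrite trace_Phi.
rewrite (@Phi_ext R d _ _ (fun p q => \sum_e \sum_(m <- ms i) \sum_(r <- rs)
   hvec m r (p.1, e, p.2) * Num.conj (hvec m r (q.1, e, q.2)))).
  exact: (Phi_decomp _ _ _ (fun e p => (p.1, e, p.2))).
move=> p q; rewrite /reduce /=; apply: eq_bigr => e _; exact: postM_decomp.
Qed.

Lemma Fsucc1_eq : Fsucc M U rho ord_max =
  \sum_i \sum_(m <- ms i) \sum_(r <- rs) G2 (U i ord_max) (hvec m r).
Proof.
rewrite /Fsucc; apply: eq_bigr => i _; rewrite trace_Phi.
rewrite (@Phi_ext R d _ _ (fun p q => \sum_e \sum_(m <- ms i) \sum_(r <- rs)
   hvec m r (e, p.1, p.2) * Num.conj (hvec m r (e, q.1, q.2)))).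
  exact: (Phi_decomp _ _ _ (fun e p => (e, p.1, p.2))).
move=> p q; rewrite /reduce /=; apply: eq_bigr => e _; exact: postM_decomp.
Qed.


Hypothesis hpovm : forall x y, \sum_i M i x y = opid R x y.
Hypothesis htr : optr rho = 1.
Hypothesis d0 : (0 < d)%N.

Lemma norm_total' :
  \sum_i \sum_(m <- ms i) \sum_(r <- rs) \sum_x hvec m r x * Num.conj (hvec m r x) = 1.
Proof.
transitivity (\sum_i \sum_x postM M rho i x x).
  apply: eq_bigr => i _.
  under [RHS]eq_bigr => x _ do rewrite (postM_decomp (hM i) hr).
  rewrite [RHS]exchange_big; apply: eq_bigr => m _; rewrite [RHS]exchange_big //.
rewrite exchange_big.
transitivity (\sum_(x : (I * I * I)%type) (d%:R ^+ 2)^-1 * \sum_zt rho (zt, x.2) (zt, x.2)).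
  apply: eq_bigr => x _.
  under eq_bigr => i _ do rewrite postM_eq.
  rewrite -mulr_sumr; congr (_ * _).
  rewrite exchange_big; apply: eq_bigr => zt _.
  rewrite exchange_big (sum_only (a0 := zt)).
    by rewrite -mulr_suml hpovm /opid eqxx mul1r.
  move=> wt hw; rewrite -mulr_suml hpovm /opid /=.
  by rewrite xpair_eqE eq_sym (negbTE hw) andbF mul0r.
rewrite -mulr_sumr sum_pair sum_pair /=.
have -> : \sum_(b0 : I) \sum_(zt : I) rho (zt, b0) (zt, b0) = 1.
  by rewrite exchange_big -htr /optr sum_pair.
have dn0 : (d%:R : C) != 0 by rewrite pnatr_eq0 -lt0n.
rewrite (eq_bigr (fun _ => d%:R)); last by move=> a _; rewrite sumr_const card_ord.
rewrite sumr_const card_ord -(mulr_natr (d%:R : C) d) -expr2 mulVf //.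
by rewrite expf_neq0.
Qed.


Variables (p lam : R).
Hypothesis core : forall i h, p%:C%C * G1 (U i ord0) h + (1 - p)%:C%C * G2 (U i ord_max) h
   <= lam%:C%C * \sum_x h x * Num.conj (h x).

Lemma assemble : p%:C%C * Fsucc M U rho ord0 + (1 - p)%:C%C * Fsucc M U rho ord_max <= lam%:C%C.
Proof.
rewrite Fsucc0_eq Fsucc1_eq -[lam%:C%C]mulr1 -norm_total' !mulr_sumr -big_split.
apply: ler_sum => i _; rewrite !mulr_sumr -big_split.
apply: ler_sum => m _; rewrite !mulr_sumr -big_split.
by apply: ler_sum => r _; apply: core.
Qed.

End Asm.


Section Core.
Variable R : realType.
Local Notation C := (R[i]).
Variable d : nat.
Hypothesis d0 : (0 < d)%N.
Local Notation I := ('I_d).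

Lemma conjX (a : C) n : Num.conj (a ^+ n) = Num.conj a ^+ n.
Proof. exact: rmorphXn. Qed.

Lemma rcD (a b : R) : (a + b)%:C%C = a%:C%C + b%:C%C. Proof. exact: rmorphD. Qed.
Lemma rcB (a b : R) : (a - b)%:C%C = a%:C%C - b%:C%C. Proof. exact: rmorphB. Qed.
Lemma rcM (a b : R) : (a * b)%:C%C = a%:C%C * b%:C%C. Proof. exact: rmorphM. Qed.
Lemma rcN (a : R) : (- a)%:C%C = - a%:C%C. Proof. exact: rmorphN. Qed.
Lemma rcX (a : R) n : (a ^+ n)%:C%C = a%:C%C ^+ n. Proof. exact: rmorphXn. Qed.
Lemma rcV (a : R) : (a^-1)%:C%C = (a%:C%C)^-1. Proof. exact: fmorphV. Qed.
Lemma rc_nat n : ((n%:R : R)%:C%C) = n%:R. Proof. exact: rmorph_nat. Qed.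
Lemma conj_rc (a : R) : Num.conj (a%:C%C) = a%:C%C. Proof. exact: conjc_real. Qed.
Lemma creal (z : C) : 0 <= z -> z = (complex.Re z)%:C%C.
Proof.
move=> hz; have hi := ger0_Im hz.
by case: z hz hi => a b /= _ ->.
Qed.

Lemma dn0 : (d%:R : C) != 0.
Proof. by rewrite pnatr_eq0 -lt0n. Qed.

Lemma unit_row (U : Op R I) : unitary U -> forall a a', \sum_b U a b * Num.conj (U a' b) = (a == a')%:R.
Proof.
case=> _ h2 a a'; have := f_equal (fun F => F a a') h2.
by rewrite /opmul /opadj /opid.
Qed.

Lemma unit_norm (U : Op R I) (w : I -> C) : unitary U ->
  \sum_b (\sum_a U a b * w a) * Num.conj (\sum_a U a b * w a) = \sum_a w a * Num.conj (w a).
Proof.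
move=> hU.
transitivity (\sum_a \sum_a' w a * Num.conj (w a') * \sum_b U a b * Num.conj (U a' b)).
  under eq_bigr => b _ do rewrite conj_sum mulr_suml.
  rewrite exchange_big; apply: eq_bigr => a _.
  under eq_bigr => b _ do rewrite mulr_sumr.
  rewrite exchange_big; apply: eq_bigr => a' _.
  rewrite mulr_sumr; apply: eq_bigr => b _; rewrite conjM; ring.
apply: eq_bigr => a _.
rewrite (sum_only (a0 := a)).
  by rewrite unit_row // eqxx mulr1.
by move=> a' ha; rewrite unit_row // eq_sym (negbTE ha) mulr0.
Qed.

Lemma unit_fro (U : Op R I) : unitary U -> \sum_a \sum_b U a b * Num.conj (U a b) = d%:R.
Proof.
move=> hU; under eq_bigr => a _ do rewrite unit_row // eqxx.
by rewrite sumr_const card_ord.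
Qed.

Lemma sum3 (F : (I * I * I)%type -> C) : \sum_x F x = \sum_a \sum_b \sum_c F (a, b, c).
Proof. by rewrite sum_pair sum_pair. Qed.

Variables U1 U2 : Op R I.
Hypothesis hU1 : unitary U1.
Hypothesis hU2 : unitary U2.
Variable h : (I * I * I)%type -> C.

Definition uu (e : I) : C := Sv U1 (fun q => h (q.1, e, q.2)).
Definition ww (e : I) : C := Sv U2 (fun q => h (e, q.1, q.2)).
Definition Ph (x : (I * I * I)%type) : C := Num.conj (U1 x.1.1 x.2) * uu x.1.2 / d%:R.
Definition Qh (x : (I * I * I)%type) : C := Num.conj (U2 x.1.2 x.2) * ww x.1.1 / d%:R.

Lemma G1E : G1 U1 h = (d%:R)^-1 * \sum_e uu e * Num.conj (uu e).
Proof. by []. Qed.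
Lemma G2E : G2 U2 h = (d%:R)^-1 * \sum_e ww e * Num.conj (ww e).
Proof. by []. Qed.

Lemma F1 : ip h Ph = G1 U1 h.
Proof.
rewrite G1E /ip sum3 exchange_big mulr_sumr; apply: eq_bigr => e _.
have -> : Num.conj (uu e) = \sum_c \sum_f Num.conj (U1 c f) * Num.conj (h (c, e, f)).
  rewrite /uu /Sv conj_sum; apply: eq_bigr => c _; rewrite conj_sum; apply: eq_bigr => f _.
  by rewrite conjM.
rewrite mulr_sumr mulr_sumr; apply: eq_bigr => c _.
rewrite mulr_sumr mulr_sumr; apply: eq_bigr => f _.
rewrite /Ph /=; ring.
Qed.

Lemma F3 : ip h Qh = G2 U2 h.
Proof.
rewrite G2E /ip sum3 mulr_sumr; apply: eq_bigr => e _.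
have -> : Num.conj (ww e) = \sum_c \sum_f Num.conj (U2 c f) * Num.conj (h (e, c, f)).
  rewrite /ww /Sv conj_sum; apply: eq_bigr => c _; rewrite conj_sum; apply: eq_bigr => f _.
  by rewrite conjM.
rewrite mulr_sumr mulr_sumr; apply: eq_bigr => c _.
rewrite mulr_sumr mulr_sumr; apply: eq_bigr => f _.
rewrite /Qh /=; ring.
Qed.

Lemma F2 : ip Ph Ph = G1 U1 h.
Proof.
rewrite G1E /ip sum3 exchange_big mulr_sumr; apply: eq_bigr => e _.
transitivity ((\sum_c \sum_f U1 c f * Num.conj (U1 c f)) * (Num.conj (uu e) * uu e / (d%:R ^+ 2))).
  rewrite mulr_suml; apply: eq_bigr => c _; rewrite mulr_suml; apply: eq_bigr => f _.
  rewrite /Ph /= !conjM conjCK conjV conj_nat expr2 invfM; ring.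
rewrite unit_fro // expr2 invfM; field.
exact: dn0.
Qed.

Lemma F4 : ip Qh Qh = G2 U2 h.
Proof.
rewrite G2E /ip sum3 mulr_sumr; apply: eq_bigr => e _.
transitivity ((\sum_c \sum_f U2 c f * Num.conj (U2 c f)) * (Num.conj (ww e) * ww e / (d%:R ^+ 2))).
  rewrite mulr_suml; apply: eq_bigr => c _; rewrite mulr_suml; apply: eq_bigr => f _.
  rewrite /Qh /= !conjM conjCK conjV conj_nat expr2 invfM; ring.
rewrite unit_fro // expr2 invfM; field.
exact: dn0.
Qed.


Definition zz (b : I) : C := \sum_a U1 a b * ww a.
Definition yy (b : I) : C := \sum_a U2 a b * uu a.

Lemma F5a : ip Ph Qh = (d%:R ^+ 2)^-1 * ip yy zz.
Proof.
rewrite /ip sum3.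
under eq_bigr => a1 _ do rewrite exchange_big.
rewrite exchange_big mulr_sumr; apply: eq_bigr => b _.
rewrite exchange_big /yy /zz conj_sum mulr_suml mulr_sumr; apply: eq_bigr => a2 _.
rewrite mulr_sumr mulr_sumr; apply: eq_bigr => a1 _.
rewrite /Ph /Qh /= !conjM conjCK conjV conj_nat expr2 invfM; ring.
Qed.

Lemma ip_zz : ip zz zz = d%:R * G2 U2 h.
Proof.
rewrite G2E mulrA mulfV ?dn0 // mul1r -(unit_norm ww hU1) /ip.
by apply: eq_bigr => b _; rewrite mulrC.
Qed.

Lemma ip_yy : ip yy yy = d%:R * G1 U1 h.
Proof.
rewrite G1E mulrA mulfV ?dn0 // mul1r -(unit_norm uu hU2) /ip.
by apply: eq_bigr => b _; rewrite mulrC.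
Qed.

Lemma F5 : ip Ph Qh * Num.conj (ip Ph Qh) <= G1 U1 h * G2 U2 h / d%:R ^+ 2.
Proof.
rewrite F5a conjM conjV conjX conj_nat.
have -> : (d%:R ^+ 2)^-1 * ip yy zz * ((d%:R ^+ 2)^-1 * Num.conj (ip yy zz)) =
   ((d%:R ^+ 2)^-1) ^+ 2 * (ip yy zz * Num.conj (ip yy zz)) by ring.
have -> : G1 U1 h * G2 U2 h / d%:R ^+ 2 = ((d%:R ^+ 2)^-1) ^+ 2 * (ip zz zz * ip yy yy).
  rewrite ip_zz ip_yy; field; exact: dn0.
apply: ler_wpM2l; first by apply: exprn_ge0; rewrite invr_ge0 exprn_ge0 // ler0n.
exact: CS.
Qed.


Lemma ip3 (T : finType) (f g k : T -> C) (a b c : C) :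
  ip (fun x => a * f x - b * g x - c * k x) (fun x => a * f x - b * g x - c * k x) =
  Num.conj a * a * ip f f - Num.conj a * b * ip f g - Num.conj a * c * ip f k
  - Num.conj b * a * ip g f + Num.conj b * b * ip g g + Num.conj b * c * ip g k
  - Num.conj c * a * ip k f + Num.conj c * b * ip k g + Num.conj c * c * ip k k.
rewrite /ip !mulr_sumr -?sumrB -?big_split -?sumrB -?big_split -?sumrB -?big_split -?sumrB -?big_split /=; apply: eq_bigr => x _.
rewrite !conjB !conjM; ring.
Qed.

Definition Xr := complex.Re (ip h h).
Definition Ar := complex.Re (G1 U1 h).
Definition Br := complex.Re (G2 U2 h).
Definition mr := complex.Re (ip Ph Qh).

Lemma G1ge0 : 0 <= G1 U1 h. Proof. by rewrite -F2; apply: ip_ge0. Qed.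
Lemma G2ge0 : 0 <= G2 U2 h. Proof. by rewrite -F4; apply: ip_ge0. Qed.
Lemma XE : ip h h = Xr%:C%C. Proof. exact/creal/ip_ge0. Qed.
Lemma AE : G1 U1 h = Ar%:C%C. Proof. exact/creal/G1ge0. Qed.
Lemma BE : G2 U2 h = Br%:C%C. Proof. exact/creal/G2ge0. Qed.

Lemma H1r (e s t : R) :
  0 <= e ^+ 2 * Xr + s ^+ 2 * Ar + t ^+ 2 * Br - 2 * e * s * Ar - 2 * e * t * Br + 2 * s * t * mr.
Proof.
have := ip_ge0 (fun x => e%:C%C * h x - s%:C%C * Ph x - t%:C%C * Qh x).
rewrite ip3 !conj_rc -(ip_conj h Ph) -(ip_conj h Qh) -(ip_conj Ph Qh) F1 F2 F3 F4.
rewrite (ge0_conj G1ge0) (ge0_conj G2ge0).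
set z := ip Ph Qh.
have hz : z + Num.conj z = 2%:R * mr%:C%C := addcJ z.
rewrite XE AE BE.
have -> : e%:C%C * e%:C%C * Xr%:C%C - e%:C%C * s%:C%C * Ar%:C%C - e%:C%C * t%:C%C * Br%:C%C -
    s%:C%C * e%:C%C * Ar%:C%C + s%:C%C * s%:C%C * Ar%:C%C + s%:C%C * t%:C%C * z -
    t%:C%C * e%:C%C * Br%:C%C + t%:C%C * s%:C%C * Num.conj z + t%:C%C * t%:C%C * Br%:C%C
  = (e ^+ 2 * Xr + s ^+ 2 * Ar + t ^+ 2 * Br - 2 * e * s * Ar - 2 * e * t * Br)%:C%C
    + s%:C%C * t%:C%C * (z + Num.conj z).
  rewrite ?rcB ?rcD ?rcN ?rcM ?rcX ?rcB ?rcD ?rcN ?rcM ?rcX ?rc_nat; ring.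
rewrite hz -[2]/(2%:R : R) -rc_nat -!rcM -rcD ler0c.
have -> : 2%:R * s * t * mr = s * t * (2%:R * mr) by ring.
by rewrite mulrA.
Qed.

Lemma H2r : mr ^+ 2 <= Ar * Br / (d%:R : R) ^+ 2.
Proof.
have := F5; rewrite AE BE -normCK -add_Re2_Im2 -/mr.
rewrite -[(d%:R : C)]rc_nat -rcX -rcV -!rcM lecR.
have := sqr_ge0 (complex.Im (ip Ph Qh)).
move=> h1 h2; lra.
Qed.

Lemma core_ineq (p : R) : (2 <= d)%N -> 0 <= p -> p <= 1 ->
  p%:C%C * G1 U1 h + (1 - p)%:C%C * G2 U2 h <=
  ((1 + Num.sqrt (1 + 4%:R * ((d%:R : R) ^+ 2 - 1) * (p - 1) * p / (d%:R : R) ^+ 2)) / 2%:R)%:C%C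
  * \sum_x h x * Num.conj (h x).
Proof.
move=> hd hp0 hp1.
have -> : \sum_x h x * Num.conj (h x) = ip h h by apply: eq_bigr => x _; rewrite mulrC.
rewrite XE AE BE -!rcM -rcD lecR.
apply: final_real => //.
- by rewrite (ler_nat R 2 d).
- by have := G1ge0; rewrite AE ler0c.
- by have := G2ge0; rewrite BE ler0c.
- exact: H1r.
- exact: H2r.
Qed.

End Core.


Local Open Scope complex_scope.

Theorem mainTheorem4 (R : realType) (d : nat) (hd : (2 <= d)%N)
  (p : R) (hp0 : 0 <= p) (hp1 : p <= 1)
  (rho : Op R ('I_d * 'I_d)%type) (hrho : is_state rho)
  (K : nat) (M : 'I_K -> Op R ('I_d * 'I_d * 'I_d)%type) (hM : is_povm M)
  (U : 'I_K -> 'I_2 -> Op R 'I_d) (hU : forall i j, unitary (U i j)) :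
  p%:C * Fsucc M U rho ord0 + (1 - p)%:C * Fsucc M U rho ord_max
  <= ((1 + Num.sqrt (1 + 4%:R * (d%:R ^+ 2 - 1) * (p - 1) * p / d%:R ^+ 2))
       / 2%:R)%:C.
Proof.
case: hrho => hrpsd htr.
case: hM => hMpsd hpovm.
have [rs hr] := psd_decomp hrpsd.
have [ms hms] := fin_all_exists (fun i => psd_decomp (hMpsd i)).
have d0 : (0 < d)%N by apply: leq_trans hd.
apply: (assemble hms hr hpovm htr d0).
move=> i h.
exact: (core_ineq d0 (hU i ord0) (hU i ord_max) h hd hp0 hp1).
Qed.
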